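(* For all integers $n\ge 1$ and $d\ge 3$, $$m^*(n,d,d-1)\ge \frac{d-1}{e}\sqrt[d-1]{\frac{nd}{d-1}},$$ where $e$ is Euler's number.
   Context: For a binary matrix $M$ and a nonempty set $S$ of its columns, $S$ is a stopping set if the submatrix formed by $S$ has no row with exactly one $1$; $s(M)$ is the minimum size of a stopping set ($+\infty$ if none). $M$ is $(d,k)$-decodable if $s(M)\ge d+1$ and every column has exactly $k$ ones; $m^*(n,d,k)$ is the minimum $m$ such that an $m\times n$ $(d,k)$-decodable binary matrix exists. *)

(* Defs.v *)
From mathcomp Require Import all_boot all_algebra.
From Stdlib Require Import Reals.

Set Implicit Arguments.
Unset Strict Implicit.
Unset Printing Implicit Defensive.

Definition stopping_set (m n : nat) (M : 'M[bool]_(m, n)) (S : {set 'I_n}) : Prop :=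
  S != set0 /\ forall i : 'I_m, #|[set j in S | M i j]| != 1%N.

(* s(M) >= t  (with s(M) = +infinity when there is no stopping set). *)
Definition stopping_distance_ge (m n : nat) (M : 'M[bool]_(m, n)) (t : nat) : Prop :=
  forall S : {set 'I_n}, stopping_set M S -> (t <= #|S|)%N.

Definition decodable (m n : nat) (d k : nat) (M : 'M[bool]_(m, n)) : Prop :=
  stopping_distance_ge M d.+1 /\ forall j : 'I_n, #|[set i : 'I_m | M i j]| = k.

(* m*(n,d,k) >= x  (m* being the minimum m for which an m x n (d,k)-decodable
   matrix exists, +infinity if none exists). *)
Definition mstar_ge (n d k : nat) (x : R) : Prop :=
  forall (m : nat) (M : 'M[bool]_(m, n)), decodable d k M -> Rle x (INR m).

(* Main.v *)
Require Import Defs.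
From mathcomp Require Import all_boot all_algebra.
From Stdlib Require Import Reals.
From mathcomp Require Import zify.
From Stdlib Require Import Lra.
Lemma INR_expn (a b : nat) : INR (expn a b) = (INR a ^ b)%R.
Proof. elim: b => [|b IH]; first by rewrite expn0. by rewrite expnS mulnE mult_INR IH. Qed.

Lemma INR_muln (a b : nat) : INR (a * b) = (INR a * INR b)%R.
Proof. by rewrite mulnE mult_INR. Qed.

Lemma exp_pow_nat (x : R) (k : nat) : exp (INR k * x) = (exp x ^ k)%R.
Proof.
elim: k => [|k IH]; first by rewrite /= Rmult_0_l exp_0.
rewrite S_INR Rmult_plus_distr_r Rmult_1_l exp_plus IH /=; ring.
Qed.

Lemma step_ineq (k : nat) : (INR k.+1 ^ k <= exp 1 * INR k ^ k)%R.
Proof.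
case: k => [|k]; first by rewrite /= ; have := exp_ineq1_le 1; lra.
set x := INR k.+1.
have hx : (0 < x)%R by apply: lt_0_INR; apply/ltP.
have e1 : INR k.+2 = (x * (1 + / x))%R by rewrite S_INR -/x; field; lra.
have h : ((1 + / x) ^ k.+1 <= exp 1)%R.
  have -> : exp 1 = exp (INR k.+1 * / x) by rewrite -/x Rinv_r //; lra.
  rewrite exp_pow_nat; apply: pow_incr; split; last exact: exp_ineq1_le.
  have := Rinv_0_lt_compat _ hx; lra.
rewrite e1 Rpow_mult_distr.
have hp : (0 <= x ^ k.+1)%R by apply: pow_le; lra.
nra.
Qed.

Lemma fact_bound (k : nat) : (INR (expn k k) <= exp (INR k) * INR (k`!))%R.
Proof.
elim: k => [|k IH]; first by rewrite /= exp_0; lra.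
rewrite INR_expn in IH; rewrite factS INR_muln expnS INR_muln INR_expn.
have -> : exp (INR k.+1) = (exp (INR k) * exp 1)%R by rewrite S_INR exp_plus.
have h1 := step_ineq k.
have h0 : (0 <= INR k.+1)%R by apply: pos_INR.
have h2 : (0 <= exp 1)%R by have := exp_pos 1; lra.
have h3 : (0 <= INR k ^ k)%R by apply: pow_le; apply: pos_INR.
have h5 : (INR k.+1 ^ k <= exp 1 * (exp (INR k) * INR k`!))%R.
  apply: Rle_trans h1 _; apply: Rmult_le_compat_l => //.
nra.
Qed.

Lemma bound_nat (n k m : nat) : (1 <= k)%N ->
  (n * k.+1 * k`! <= k * expn m k)%N ->
  (INR (n * k.+1) / INR k <= (exp 1 * INR m / INR k) ^ k)%R.
Proof.
move=> hk hN.
have hK : (0 < INR k)%R by apply: lt_0_INR; apply/ltP.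
have hF : (0 < INR k`!)%R by apply: lt_0_INR; apply/ltP; apply: fact_gt0.
have hN' : (INR (n * k.+1) * INR k`! <= INR k * INR m ^ k)%R.
  rewrite -INR_muln -INR_expn -INR_muln; apply: le_INR; apply/leP; exact: hN.
have hB := fact_bound k. rewrite INR_expn in hB.
set E := exp (INR k) in hB *.
have hE : E = (exp 1 ^ k)%R by rewrite /E -exp_pow_nat Rmult_1_r.
rewrite /Rdiv !Rpow_mult_distr -hE pow_inv.
have hQ : (0 < INR k ^ k)%R by apply: pow_lt.
have hP : (0 <= INR m ^ k)%R by apply: pow_le; apply: pos_INR.
have hn : (0 <= INR (n * k.+1))%R by apply: pos_INR.
have hE0 : (0 < E)%R by apply: exp_pos.
apply: (Rmult_le_reg_r (INR k * INR k ^ k)); first by apply: Rmult_lt_0_compat.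
have -> : (INR (n * k.+1) * / INR k * (INR k * INR k ^ k) = INR (n * k.+1) * INR k ^ k)%R by field; lra.
have -> : (E * INR m ^ k * / INR k ^ k * (INR k * INR k ^ k) = E * INR m ^ k * INR k)%R by field; lra.
nra.
Qed.

Lemma bound_small (k : nat) : (1 <= k)%N ->
  (INR (1 * k.+1) / INR k <= (exp 1 * INR k / INR k) ^ k)%R.
Proof.
move=> hk.
have hK : (1 <= INR k)%R by apply: (le_INR 1); apply/leP.
have -> : (exp 1 * INR k / INR k = exp 1)%R by field; lra.
have he : (2 <= exp 1)%R by have := exp_ineq1_le 1; lra.
apply: Rle_trans (_ : exp 1 ^ 1 <= _)%R; last by apply: Rle_pow => //; [lra | apply/leP].
rewrite mul1n S_INR /=.
apply: (Rmult_le_reg_r (INR k)); first lra.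
have -> : ((INR k + 1) / INR k * INR k = INR k + 1)%R by field; lra.
nra.
Qed.

Lemma final_bound (n k m : nat) : (1 <= k)%N -> (1 <= n)%N -> (k <= m)%N ->
  (INR (n * k.+1) / INR k <= (exp 1 * INR m / INR k) ^ k)%R ->
  (INR k / exp 1 * Rpower (INR (n * k.+1) / INR k) (/ INR k) <= INR m)%R.
Proof.
move=> hk hn hm H.
have hK : (0 < INR k)%R by apply: lt_0_INR; apply/ltP.
have hM : (INR k <= INR m)%R by apply: le_INR; apply/leP.
have he : (0 < exp 1)%R by apply: exp_pos.
have hA : (0 < INR (n * k.+1) / INR k)%R.
  apply: Rdiv_lt_0_compat => //; apply: lt_0_INR; apply/ltP; by rewrite muln_gt0 hn.
have hX : (0 < exp 1 * INR m / INR k)%R.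
  apply: Rdiv_lt_0_compat => //; apply: Rmult_lt_0_compat; lra.
have H2 := Rle_Rpower_l _ _ (/ INR k) (Rlt_le _ _ (Rinv_0_lt_compat _ hK)) (conj hA H).
rewrite -Rpower_pow // Rpower_mult Rinv_r ?Rpower_1 // in H2; last lra.
apply: Rle_trans (Rmult_le_compat_l _ _ _ _ H2) _.
  by apply: Rlt_le; apply: Rdiv_lt_0_compat.
right; field; lra.
Qed.
From Stdlib Require Import Lia.


Lemma col_inj (m n k : nat) (M : 'M[bool]_(m, n)) : (2 <= k)%N ->
  decodable k.+1 k M -> injective (fun j => [set i | M i j]).
Proof.
move=> hk [hs hc] j j' e.
apply/eqP; apply: contraT => hne.
have hij : forall i, M i j' = M i j.
  move=> i; have := congr1 (fun A : {set 'I_m} => i \in A) e; rewrite /= !inE => ->; done.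
have hS : stopping_set M [set j; j'].
  split; first by apply/set0Pn; exists j; rewrite !inE eqxx.
  move=> i.
  have -> : [set x in [set j; j'] | M i x] = if M i j then [set j; j'] else set0.
    apply/setP=> x; have h' := hij i; case hj: (M i j); rewrite hj in h'; rewrite !inE;
    (have [->|nxj] := eqVneq x j; first by rewrite ?hj);
    (have [->|nxj'] := eqVneq x j'; first by rewrite ?h');
    by [].
  by case: (M i j); rewrite ?cards2 ?hne ?cards0.
have := hs _ hS; rewrite cards2 hne /=.
move=> h; have := leq_trans hk h; by [].
Qed.

Lemma sub_bound (m n k : nat) (M : 'M[bool]_(m, n)) : (2 <= k)%N ->
  decodable k.+1 k M -> forall U : {set 'I_m}, #|U| = k.+1 ->
  (#|[set j | [set i | M i j] \subset U]| <= k)%N.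
Proof.
move=> hk D U hU; have inj := col_inj _ _ _ _ hk D; case: D => [hs hc].
rewrite leqNgt; apply/negP => /card_geqP [s [us ss sub]].
pose S := [set x in s].
have hSc : #|S| = k.+1 by rewrite cardsE (card_uniqP us) ss.
have hSU : forall x, x \in s -> [set i | M i x] \subset U.
  by move=> x /sub; rewrite inE.
have hS : stopping_set M S.
  split; first by rewrite -card_gt0 hSc.
  move=> i.
  have [iU|niU] := boolP (i \in U); last first.
    have -> : [set x in S | M i x] = set0.
      apply/setP=> x; rewrite !inE; apply/negbTE/andP => [[xS Mix]].
      move: (subsetP (hSU x xS) i); rewrite inE Mix => /(_ isT); by rewrite (negbTE niU).
    by rewrite cards0.
  have hUi : #|U :\ i| = k by move: (cardsD1 i U); rewrite iU hU add1n => -[].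
  have hT : (#|[set x in S | ~~ M i x]| <= 1)%N.
    apply/card_le1_eqP => x y; rewrite !inE => /andP[xS nx] /andP[yS ny].
    have cU : forall z, z \in s -> ~~ M i z -> [set i0 | M i0 z] = U :\ i.
      move=> z zS nz; apply/eqP; rewrite eqEcard (hc z) hUi leqnn andbT.
      apply/subsetP => i0; rewrite !inE => Mz; rewrite (subsetP (hSU z zS) i0) ?inE // andbT.
      by apply/eqP => ei; move: Mz; rewrite ei; apply/negP.
    by apply: inj; rewrite (cU x xS nx) (cU y yS ny).
  have hsum := cardsID [set x | M i x] S.
  have -> : [set x in S | M i x] = S :&: [set x | M i x] by apply/setP=> x; rewrite !inE.
  have e2 : [set x in S | ~~ M i x] = S :\: [set x | M i x] by apply/setP=> x; rewrite !inE andbC.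
  rewrite e2 in hT.
  apply/eqP => h1; rewrite h1 hSc in hsum.
  have : (k.+1 <= 2)%N by rewrite -hsum ltnS.
  by rewrite ltnS leqNgt hk.
have := hs _ hS; by rewrite hSc ltnn.
Qed.

Lemma card_sep (T : finType) (A : {set T}) (P : pred T) :
  #|[set x in A | P x]| = \sum_(x in A) (P x : nat).
Proof.
rewrite -sum1_card (eq_bigl (fun x => (x \in A) && P x)); last by move=> x; rewrite !inE.
by rewrite big_mkcondr /=; apply: eq_bigr => x _; case: (P x).
Qed.

Lemma card_sep' (T : finType) (P : pred T) :
  #|[set x | P x]| = \sum_(x : T) (P x : nat).
Proof.
rewrite -sum1_card (eq_bigl (fun x => P x)); last by move=> x; rewrite !inE.
by rewrite big_mkcond /=; apply: eq_bigr => x _; case: (P x).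
Qed.

Lemma col_lower (m : nat) (C : {set 'I_m}) (k : nat) : #|C| = k ->
  (m - k <= #|[set U in [set U : {set 'I_m} | #|U| == k.+1] | C \subset U]|)%N.
Proof.
move=> hC.
have hinj : {in ~: C &, injective (fun x => x |: C)}.
  move=> x y; rewrite !inE => nx ny e.
  have : x \in y |: C by rewrite -e setU11.
  by rewrite !inE (negbTE nx) orbF => /eqP.
have <- : #|~: C| = (m - k)%N by rewrite cardsCs card_ord setCK hC.
rewrite -(card_in_imset hinj); apply: subset_leq_card.
apply/subsetP => U /imsetP [x]; rewrite inE => nx ->.
by rewrite !inE cardsU1 -(in_setC x C) nx hC add1n eqxx subsetUr.
Qed.

Lemma count_main (m n k : nat) (M : 'M[bool]_(m, n)) : (2 <= k)%N ->
  decodable k.+1 k M -> (n * (m - k) <= 'C(m, k.+1) * k)%N.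
Proof.
move=> hk D.
pose F := [set U : {set 'I_m} | #|U| == k.+1].
have e : \sum_(j < n) #|[set U in F | [set i | M i j] \subset U]|
       = \sum_(U in F) #|[set j | [set i | M i j] \subset U]|.
  have e1 : forall j : 'I_n, #|[set U in F | [set i | M i j] \subset U]| = \sum_(U in F) (([set i | M i j] \subset U) : nat).
    move=> j; rewrite -(card_sep _ F (fun U => [set i | M i j] \subset U)); by apply: eq_card => x; rewrite !inE.
  rewrite (eq_bigr _ (fun j _ => e1 j)) exchange_big /=; apply: eq_bigr => U _.
  by rewrite -(card_sep' _ (fun j : 'I_n => [set i | M i j] \subset U)); apply: eq_card => x; rewrite !inE.
have h1 : (n * (m - k) <= \sum_(j < n) #|[set U in F | [set i | M i j] \subset U]|)%N.
  rewrite -[X in (X * _)%N]card_ord -sum_nat_const; apply: leq_sum => j _.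
  apply: col_lower; by case: D => _ /(_ j).
have h2 : (\sum_(U in F) #|[set j | [set i | M i j] \subset U]| <= 'C(m, k.+1) * k)%N.
  have <- : #|F| = 'C(m, k.+1) by rewrite card_draws card_ord.
  rewrite -sum_nat_const; apply: leq_sum => U; rewrite inE => /eqP hU.
  exact: (sub_bound _ _ _ _ hk D U hU).
by apply: leq_trans h1 _; rewrite e.
Qed.

Lemma ffact_le_exp (m k : nat) : (m ^_ k <= expn m k)%N.
Proof.
rewrite ffact_prod -[X in (_ <= expn _ X)%N]card_ord -prod_nat_const.
by apply: leq_prod => i _; apply: leq_subr.
Qed.

Lemma comb_final (m n k : nat) (M : 'M[bool]_(m, n)) : (2 <= k)%N -> (1 <= n)%N ->
  decodable k.+1 k M ->
  (k <= m)%N /\ ((n * k.+1 * k`! <= k * expn m k)%N \/ (m = k /\ n = 1%N)).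
Proof.
move=> hk hn D.
have inj := col_inj _ _ _ _ hk D.
have hc : forall j, #|[set i | M i j]| = k by case: D.
have hkm : (k <= m)%N.
  by rewrite -(hc (Ordinal hn)) -[X in (_ <= X)%N]card_ord max_card.
split => //.
have [hmk|hmk] := leqP m k.
  right; have emk : m = k by apply/eqP; rewrite eqn_leq hmk hkm.
  split => //.
  have full : forall j, [set i | M i j] = setT.
    move=> j; apply/eqP; rewrite eqEcard subsetT cardsT card_ord hc emk leqnn //.
  apply/eqP; rewrite eqn_leq hn andbT leqNgt; apply/negP => h1.
  have := inj (Ordinal hn) (Ordinal h1); rewrite !full => /(_ erefl) /(congr1 val) /=.
  by [].
left.
have hmk' : (0 < m - k)%N by rewrite subn_gt0.
have h := count_main _ _ _ _ hk D.
have h2 : (n * k.+1 <= k * 'C(m, k))%N.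
  rewrite -(leq_pmul2r hmk').
  have := leq_mul h (leqnn k.+1).
  have e := mul_bin_left m k.
  move: e; set C1 := 'C(m, k.+1); set C0 := 'C(m, k); set d := (m - k)%N => e.
  move=> h3; nia.
apply: leq_trans (leq_mul h2 (leqnn k`!)) _.
by rewrite -mulnA bin_ffact leq_mul2l ffact_le_exp orbT.
Qed.

Theorem theorem6p4 (n d : nat) :
  (1 <= n)%N -> (3 <= d)%N ->
  mstar_ge n d (d - 1)
    (Rmult (Rdiv (INR (d - 1)) (exp 1))
           (Rpower (Rdiv (INR (n * d)) (INR (d - 1))) (Rinv (INR (d - 1))))).
Proof.
move=> hn hd; case: d hd => [|k] // hd; rewrite /mstar_ge => m M D.
have ek : (k.+1 - 1)%N = k by lia.
rewrite ek in D *.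
have hk : (2 <= k)%N by [].
have hk1 : (1 <= k)%N by apply: leq_trans hk.
have [hkm [N|[emk en]]] := comb_final _ _ _ M hk hn D.
  have H := final_bound n k m hk1 hn hkm (bound_nat n k m hk1 N).
  exact H.
subst n m.
have H := bound_small k hk1.
exact (final_bound 1 k k hk1 hn hkm H).
Qed.
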